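(* Let $d$ and $h$ be positive integers with $d\geq\frac{4}{3}\cdot 2^{2h-1}+h-1$. Let $T$ be the rooted tree of depth $d$ in which the root has exactly $5$ children and every non-root vertex at depth less than $d$ has exactly $4$ children (so $T$ has maximum degree $5$). Let $S$ be a set of $5\cdot 4^{d-h-1}$ leaves of $T$ that contains exactly one descendant of every vertex of depth $d-h$. Then $S$ is an exponential dominating set of $T$; in particular $\gamma_e(T)\leq 5\cdot 4^{d-h-1}$.
   Context: The depth of a vertex in a rooted tree is its distance from the root, and the depth of the tree is the maximum depth of a vertex. For a graph $G$, a set $S\subseteq V(G)$, and vertices $u,v$ with $u\in S$ or $v\in S$, ${\rm dist}_{(G,S)}(u,v)$ is the minimum number of edges of a path $P$ in $G$ between $u$ and $v$ such that $S$ contains exactly one endvertex of $P$ and no internal vertex of $P$, and $\infty$ if no such path exists (so ${\rm dist}_{(G,S)}(u,u)=0$ for $u\in S$). For $u\in V(G)$, $w_{(G,S)}(u)=\sum_{v\in S}(1/2)^{{\rm dist}_{(G,S)}(u,v)-1}$ with $(1/2)^{\infty}=0$. $S$ is an exponential dominating set of $G$ if $w_{(G,S)}(u)\geq 1$ for every $u\in V(G)$, and $\gamma_e(G)$ is the minimum cardinality of an exponential dominating set of $G$. *)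

(* Defs.v *)
From HB Require Import structures.
From mathcomp Require Import all_boot all_order all_algebra.
Set Implicit Arguments. Unset Strict Implicit. Unset Printing Implicit Defensive.
Import Order.TTheory GRing.Theory Num.Theory.

Section ExpDom.
Variables (V : finType) (e : rel V).

(* A path with [n] edges from [u] to [v] (vertex sequence u :: p, no repeated
   vertices) such that S contains exactly one endvertex and no internal vertex. *)
Definition admissible_path (S : {set V}) (u v : V) (n : nat) (p : seq V) : bool :=
  [&& path e u p, last u p == v, uniq (u :: p), size p == n,
      #|[set u; v] :&: S| == 1 &
      all (fun x => x \notin S) (take (size p).-1 p)].

Definition has_admissible_path (S : {set V}) (u v : V) (n : nat) : bool :=
  [exists t : n.-tuple V, admissible_path S u v n (val t)].

(* dist_(G,S)(u,v) : Some n, or None standing for infinity.  Paths without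
   repeated vertices have fewer than #|V| edges, so searching n < #|V| suffices. *)
Definition distS (S : {set V}) (u v : V) : option nat :=
  let k := find (has_admissible_path S u v) (iota 0 #|V|) in
  if k < #|V| then Some k else None.

Definition expweight (S : {set V}) (u : V) : rat :=
  \sum_(v in S)
    match distS S u v with
    | Some n => ((1 / 2 : rat) ^ (n%:Z - 1))%R
    | None => 0%R
    end.

Definition exp_dominating (S : {set V}) : Prop :=
  forall u : V, (1 <= expweight S u)%R.

Definition exp_dominating_b (S : {set V}) : bool :=
  [forall u : V, (1 <= expweight S u)%R].

(* gamma_e : minimum cardinality of an exponential dominating set
   (V itself is always exponential dominating, so #|V| is a valid default). *)
Definition gamma_e : nat :=
  \big[minn/#|V|]_(S : {set V} | exp_dominating_b S) #|S|.

End ExpDom.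

(* A vertex at depth k is encoded as (k, f) where f 0, ..., f (k-1) are the
   child indices along the path from the root: f 0 < 5 (root has 5 children)
   and f i < 4 for i >= 1 (other internal vertices have 4 children);
   entries f i for i >= k are padded with 0. *)
Definition tvalid {d : nat} (x : 'I_d.+1 * {ffun 'I_d -> 'I_5}) : bool :=
  [forall i : 'I_d, ((x.1 <= i)%N ==> (x.2 i == ord0)) &&
                    ((0 < i)%N ==> (x.2 i < 4)%N)].

Definition Tvert (d : nat) := {x : 'I_d.+1 * {ffun 'I_d -> 'I_5} | tvalid x}.

Definition depth (d : nat) (x : Tvert d) : nat := (val x).1.

Definition descendant (d : nat) (x y : Tvert d) : bool :=
  (depth x <= depth y)%N &&
  [forall i : 'I_d, ((i < depth x)%N ==> ((val x).2 i == (val y).2 i))].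

Definition tchild (d : nat) (x y : Tvert d) : bool :=
  (depth y == (depth x).+1) && descendant x y.

Definition Tedge (d : nat) : rel (Tvert d) := fun x y => tchild x y || tchild y x.

Definition is_leaf (d : nat) (x : Tvert d) : bool := depth x == d.

(* Main.v *)
Require Import Defs.
From HB Require Import structures.
From mathcomp Require Import all_boot all_order all_algebra.
From mathcomp Require Import zify ring lra.
Import Order.TTheory GRing.Theory Num.Theory.
Set Implicit Arguments. Unset Strict Implicit. Unset Printing Implicit Defensive.

Definition E d (x : Tvert d) (i : nat) : nat :=
  if insub i is Some j then nat_of_ord ((val x).2 (j : 'I_d)) else 0.

Lemma E_ord d (x : Tvert d) (i : 'I_d) : E x i = (val x).2 i.
Proof. by rewrite /E valK. Qed.

Lemma E_out d (x : Tvert d) (i : nat) : (depth x <= i)%N -> E x i = 0.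
Proof.
move=> Hd; rewrite /E; case: insubP => [j _ Hj|//]; subst i.
case: x Hd => [[k f] Hv]; rewrite /depth /= => Hd; move/forallP: (Hv) => H.
by move: (H j) => /andP[/implyP/(_ Hd)/eqP -> _].
Qed.

Lemma E_bnd d (x : Tvert d) (i : nat) : (E x i < (if i == 0 then 5 else 4))%N.
Proof.
rewrite /E; case: insubP => [j _ <-|//]; last by case: (i == 0).
case: x => [[k f] Hv] /=; move/forallP: (Hv) => H.
case: (j : nat) (H j) => [|n] /andP[_ H2] /=; first by [].
exact: (implyP H2).
Qed.

Lemma depth_le d (x : Tvert d) : (depth x <= d)%N.
Proof. by rewrite /depth -ltnS. Qed.

Lemma Tvert_eq d (x y : Tvert d) : depth x = depth y -> (forall i, E x i = E y i) -> x = y.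
Proof.
move=> Hd HE; apply: val_inj.
case: x y Hd HE => [[k f] Hx] [[k' f'] Hy] /= Hd HE.
congr pair; first exact: ord_inj.
apply/ffunP => i; apply: ord_inj; move: (HE i).
by rewrite !E_ord.
Qed.

Lemma descE d (x y : Tvert d) : descendant x y <->
  (depth x <= depth y)%N /\ (forall i, (i < depth x)%N -> E x i = E y i).
Proof.
rewrite /descendant; split.
  move=> /andP[H1 /forallP H2]; split => // i Hi.
  have Hid : (i < d)%N by apply: (leq_trans Hi); apply: depth_le.
  move: (H2 (Ordinal Hid)) => /implyP/(_ Hi)/eqP.
  move=> H3; have := E_ord x (Ordinal Hid); have := E_ord y (Ordinal Hid).
  by rewrite /= => -> ->; rewrite H3.
move=> [H1 H2]; rewrite H1 /=; apply/forallP => i; apply/implyP => Hi.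
by apply/eqP; apply: ord_inj; rewrite -!E_ord; apply: H2.
Qed.

Definition mkfun d k (f : nat -> nat) : {ffun 'I_d -> 'I_5} :=
  [ffun i : 'I_d => if (i < k)%N then inord (minn (f i) (if i == 0 :> nat then 4 else 3)) else ord0].

Lemma mk_valid d k f : @tvalid d (inord (minn k d), mkfun d k f).
Proof.
apply/forallP => i /=; rewrite inordK ?ltnS ?geq_minr // ffunE.
apply/andP; split; apply/implyP => Hi.
  have Hki : (k <= i)%N by move: Hi (ltn_ord i); lia.
  by rewrite ifF //; apply/negbTE; rewrite -leqNgt.
case: ifP => _ //=; have -> : (i == 0 :> nat) = false by lia.
rewrite inordK; lia.
Qed.

Definition mkT d k f : Tvert d := @exist _ (@tvalid d) _ (mk_valid d k f).

Lemma depth_mkT d k f : depth (mkT d k f) = minn k d.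
Proof. by rewrite /depth /= inordK // ltnS geq_minr. Qed.

Lemma E_mkT d k f i : (i < d)%N ->
  E (mkT d k f) i = if (i < k)%N then minn (f i) (if i == 0 then 4 else 3) else 0.
Proof.
move=> Hid; have := E_ord (mkT d k f) (Ordinal Hid); rewrite /= => ->.
rewrite ffunE /=; case: ifP => // _.
rewrite inordK //; case: (i == 0); lia.
Qed.

Definition pre d (x : Tvert d) j := mkT d (minn j (depth x)) (E x).

Lemma depth_pre d (x : Tvert d) j : depth (pre x j) = minn j (depth x).
Proof.
rewrite depth_mkT; apply/minn_idPl; rewrite geq_min; apply/orP; right; exact: depth_le.
Qed.

Lemma E_pre d (x : Tvert d) j i : E (pre x j) i = if (i < j)%N then E x i else 0.
Proof.
case: (ltnP i (depth x)) => Hi.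
  have Hid : (i < d)%N by apply: (leq_trans Hi); apply: depth_le.
  rewrite E_mkT // leq_min Hi andbT.
  case: ifP => // _; apply/minn_idPl.
  have := E_bnd x i; case: (i == 0) => //.
rewrite (E_out (x := x)) // if_same E_out // depth_pre; lia.
Qed.

Lemma pre_full d (x : Tvert d) j : (depth x <= j)%N -> pre x j = x.
Proof.
move=> Hj; apply: Tvert_eq; first by rewrite depth_pre; apply/minn_idPr.
move=> i; rewrite E_pre; case: ltnP => // Hi.
by rewrite E_out //; apply: leq_trans Hi.
Qed.

Lemma desc_pre d (x : Tvert d) j j' : (j <= j')%N -> descendant (pre x j) (pre x j').
Proof.
move=> Hj; apply/descE; rewrite !depth_pre; split.
  by rewrite leq_min geq_minr andbT; apply: leq_trans (geq_minl _ _) Hj.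
move=> i; rewrite leq_min => /andP[H1 _]; rewrite !E_pre H1.
by rewrite (leq_trans H1 Hj).
Qed.

Lemma desc_pre_self d (x : Tvert d) j : descendant (pre x j) x.
Proof.
apply/descE; rewrite depth_pre; split; first exact: geq_minr.
by move=> i Hi; rewrite E_pre; move: Hi; rewrite leq_min => /andP[-> _].
Qed.

Lemma desc_root d (x y : Tvert d) : descendant (pre x 0) y.
Proof. by apply/descE; rewrite depth_pre; split; [lia | move=> i; lia]. Qed.

Lemma pre_of_desc d (a y : Tvert d) : descendant a y -> pre y (depth a) = a.
Proof.
move/descE=> [H1 H2]; apply: Tvert_eq; first by rewrite depth_pre; apply/minn_idPl.
move=> i; rewrite E_pre; case: ltnP => Hi; first by rewrite H2.
by rewrite E_out.
Qed.

Lemma desc_mono d (u s : Tvert d) j j' : (j' <= j)%N -> descendant (pre u j) s ->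
  descendant (pre u j') s.
Proof.
move=> Hj /descE [H1 H2]; apply/descE; split.
  by apply: leq_trans H1; rewrite !depth_pre; lia.
move=> i Hi; rewrite -H2; last by move: Hi; rewrite !depth_pre; lia.
rewrite !E_pre; move: Hi; rewrite depth_pre => Hi.
by rewrite (_ : (i < j') = true); [rewrite (_ : (i < j) = true)|]; lia.
Qed.

Lemma edge_pre d (x : Tvert d) j : (j < depth x)%N ->
  Tedge (pre x j) (pre x j.+1) /\ Tedge (pre x j.+1) (pre x j).
Proof.
move=> Hj.
have H : tchild (pre x j) (pre x j.+1).
  by rewrite /tchild !depth_pre desc_pre // andbT; apply/eqP; lia.
by rewrite /Tedge H orbT.
Qed.

Lemma last_iotaS L m : last m (iota m.+1 L) = m + L.
Proof. by elim: L m => [|L IH] m /=; [rewrite addn0 | rewrite IH addnS]. Qed.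

Lemma last_iota1 L : last 0 (iota 1 L) = L.
Proof. exact: last_iotaS. Qed.

Lemma path_fun (V : finType) (e : rel V) (g : nat -> V) n a :
  (forall i, (a <= i < a + n)%N -> e (g i) (g i.+1)) -> path e (g a) (map g (iota a.+1 n)).
Proof.
elim: n a => [//|n IH] a H /=.
rewrite H ?leqnn ?addnS ?ltnS ?leq_addr //=.
apply: IH => i /andP[H1 H2]; apply: H; rewrite addnS -addSn H2 andbT.
exact: ltnW.
Qed.

Lemma adm_from_fun (V : finType) (e : rel V) (S : {set V}) (g : nat -> V) L u v :
  g 0 = u -> g L = v -> (forall i, (i < L)%N -> e (g i) (g i.+1)) ->
  {in iota 0 L.+1 &, injective g} -> #|[set u; v] :&: S| == 1%N ->
  (forall i, (0 < i < L)%N -> g i \notin S) ->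
  has_admissible_path e S u v L.
Proof.
move=> H0 HL He Hinj Hc Hin.
have Hs : size (map g (iota 1 L)) == L by rewrite size_map size_iota.
apply/existsP; exists (Tuple Hs); rewrite /admissible_path.
change (tval (Tuple Hs)) with (map g (iota 1 L)).
have P1 : path e u (map g (iota 1 L)).
  by rewrite -H0; apply: path_fun => i /andP[_ Hi]; apply: He.
have P2 : last u (map g (iota 1 L)) == v by rewrite -H0 last_map last_iota1 HL.
have P3 : uniq (u :: map g (iota 1 L)).
  have -> : u :: map g (iota 1 L) = map g (iota 0 L.+1) by rewrite -H0.
  by rewrite (map_inj_in_uniq Hinj) iota_uniq.
rewrite P1 P2 P3 Hs Hc /=.
apply/allP => x; rewrite size_map size_iota -map_take take_iota => /mapP[i].
rewrite mem_iota => /andP[H1 H2] ->; apply: Hin.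
by rewrite H1 /=; move: H2; rewrite add1n; lia.
Qed.

Lemma adm_lt (V : finType) (e : rel V) (S : {set V}) u v n :
  has_admissible_path e S u v n -> (n < #|V|)%N.
Proof.
move=> /existsP[t /andP[_ /andP[_ /andP[Hu /andP[/eqP Hs _]]]]].
have := max_card (mem (u :: tval t)).
by rewrite (card_uniqP Hu) /= Hs.
Qed.

Lemma distS_le (V : finType) (e : rel V) (S : {set V}) u v n :
  has_admissible_path e S u v n -> exists2 n', distS e S u v = Some n' & (n' <= n)%N.
Proof.
move=> H; have Hn := adm_lt H.
rewrite /distS.
set a := has_admissible_path e S u v.
have Hf : (find a (iota 0 #|V|) <= n)%N.
  rewrite leqNgt; apply/negP => Hlt.
  have := before_find 0 Hlt; rewrite nth_iota // add0n.
  by rewrite /a H.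
rewrite (leq_ltn_trans Hf Hn); by exists (find a (iota 0 #|V|)).
Qed.

Lemma depth_pre_le d (x : Tvert d) j : (j <= depth x)%N -> depth (pre x j) = j.
Proof. by move=> H; rewrite depth_pre; apply/minn_idPl. Qed.

Lemma tree_path d (S : {set Tvert d}) (u s : Tvert d) m :
  (forall s, s \in S -> depth s = d) -> u \notin S -> s \in S ->
  (m <= depth u)%N -> descendant (pre u m) s ->
  (forall j, (m < j <= depth u)%N -> ~~ descendant (pre u j) s) ->
  has_admissible_path (@Tedge d) S u s (depth u - m + (d - m)).
Proof.
move=> Hleaf HuS HsS Hm Hdesc Hmax.
set k := depth u.
have Hds : depth s = d by apply: Hleaf.
have Hkd : (k <= d)%N by apply: depth_le.
have Hum : pre s m = pre u m.
  by have := pre_of_desc Hdesc; rewrite depth_pre_le.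
have Hmd : (m < d)%N.
  rewrite ltnNge; apply/negP => Hdm.
  have Hmk : m = k by lia.
  have Hus : u = s.
    have E1 : pre u m = u by apply: pre_full; lia.
    have E2 : pre s m = s by apply: pre_full; lia.
    by rewrite -E1 -E2 Hum.
  by move: HuS; rewrite Hus HsS.
set L := k - m + (d - m).
pose g i := if (i <= k - m)%N then pre u (k - i) else pre s (m + (i - (k - m))).
have Hdown : forall i, (k - m <= i)%N -> g i = pre s (m + (i - (k - m))).
  move=> i Hi; rewrite /g; case: leqP => // Hi2.
  have -> : i = k - m by lia.
  by rewrite subnn addn0 Hum; congr pre; lia.
have Hdep : forall i, (i <= L)%N ->
    depth (g i) = if (i <= k - m)%N then k - i else m + (i - (k - m)).
  move=> i HiL; case: leqP => Hi.
    by rewrite /g Hi depth_pre_le //; lia.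
  by rewrite Hdown ?(ltnW Hi) // depth_pre_le // Hds; lia.
apply: (@adm_from_fun _ _ S g L u s).
- by rewrite /g leq0n subn0 pre_full.
- by rewrite Hdown /L ?leq_addr // pre_full // Hds; lia.
- move=> i HiL; case: (ltnP i (k - m)) => Hi.
    rewrite /g (ltnW Hi) Hi.
    have -> : k - i = (k - i.+1).+1 by lia.
    by apply: (proj2 (edge_pre _)); lia.
  rewrite !Hdown //; last exact: leqW.
  have -> : m + (i.+1 - (k - m)) = (m + (i - (k - m))).+1 by lia.
  by apply: (proj1 (edge_pre _)); rewrite Hds; lia.
- move=> i j; rewrite !mem_iota !add0n !ltnS => /andP[_ Hi] /andP[_ Hj] Hg.
  have Hd := congr1 (@depth d) Hg.
  rewrite !Hdep // in Hd.
  have cross : forall a b, (a <= L)%N -> (b <= L)%N -> (a < k - m)%N -> (k - m < b)%N ->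
      g a = g b -> False.
    move=> a b Ha Hb Ha2 Hb2 Hgab.
    have Hdab := congr1 (@depth d) Hgab; rewrite !Hdep // (ltnW Ha2) leqNgt Hb2 /= in Hdab.
    have := Hmax (k - a); rewrite (_ : (m < k - a <= k)%N = true); last by lia.
    move=> /(_ isT) /negP HH; apply: HH.
    have -> : pre u (k - a) = g a by rewrite /g (ltnW Ha2).
    rewrite Hgab Hdown ?(ltnW Hb2) //; exact: desc_pre_self.
  move: Hd; case: (leqP i (k - m)) => Hi2; case: (leqP j (k - m)) => Hj2 Hd; try lia.
  + case: (ltnP i (k - m)) => Hi3; last lia.
    by exfalso; apply: (cross i j).
  + case: (ltnP j (k - m)) => Hj3; last lia.
    by exfalso; apply: (cross j i).
- suff -> : [set u; s] :&: S = [set s] by rewrite cards1.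
  apply/setP => x.
  rewrite !inE; case: (x =P u) => [->|_] /=.
    rewrite (negbTE HuS); case: eqP => // Hus; move: HuS; rewrite Hus HsS //.
  by case: (x =P s) => [->|_]; rewrite ?HsS.
- move=> i /andP[Hi0 HiL]; apply/negP => Hin.
  have := Hleaf _ Hin; rewrite Hdep ?(ltnW HiL) //; case: leqP => _; lia.
Qed.

Definition child d (x : Tvert d) (c : nat) : Tvert d :=
  mkT d (depth x).+1 (fun i => if i == depth x then c else E x i).

Lemma desc_child d (x s : Tvert d) (c : nat) : (0 < depth x)%N -> (depth x < d)%N ->
  (c < 4)%N -> depth s = d ->
  descendant (child x c) s = descendant x s && (E s (depth x) == c).
Proof.
move=> H0 Hd Hc Hs.
have Edep : depth (child x c) = (depth x).+1 by rewrite depth_mkT; apply/minn_idPl.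
have Ech : forall i, (i < (depth x).+1)%N -> E (child x c) i = if i == depth x then c else E x i.
  move=> i Hi; rewrite E_mkT ?Hi; last by lia.
  case: eqP => [->|Hne]; first by (have -> : (depth x == 0) = false by lia); apply/minn_idPl; lia.
  by apply/minn_idPl; have := E_bnd x i; case: (i == 0); lia.
apply/idP/idP.
  move/descE => [H1 H2]; apply/andP; split.
    apply/descE; split; first by rewrite Hs; exact: depth_le.
    move=> i Hi; rewrite -H2 ?Edep; last by lia.
    by rewrite Ech; [have -> : (i == depth x) = false by lia|lia].
  by rewrite -H2 ?Edep // Ech // eqxx.
move=> /andP[/descE [H1 H2] /eqP H3]; apply/descE; split; first by rewrite Edep Hs.
move=> i; rewrite Edep => Hi; rewrite Ech //.
by case: eqP => [->|Hne]; [rewrite H3 | apply: H2; lia].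
Qed.

Lemma count_desc d (S : {set Tvert d}) D :
  (forall s, s \in S -> depth s = d) -> (D <= d)%N ->
  (forall v : Tvert d, depth v = D -> #|[set s in S | descendant v s]| = 1%N) ->
  forall n (x : Tvert d), depth x + n = D -> (0 < depth x)%N ->
  #|[set s in S | descendant x s]| = 4 ^ n.
Proof.
move=> Hleaf HD Hone; elim=> [|n IH] x Hx H0; first by rewrite expn0 Hone // -Hx addn0.
have Hxd : (depth x < d)%N by lia.
rewrite -sum1_card.
rewrite (partition_big (fun s => (inord (E s (depth x)) : 'I_4)) predT) //=.
rewrite (eq_bigr (fun _ => 4 ^ n)).
  by rewrite sum_nat_const card_ord expnS.
move=> c _.
have Hc := ltn_ord c.
have Hch : depth (child x c) = (depth x).+1 by rewrite depth_mkT; apply/minn_idPl.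
rewrite -(IH (child x c)) ?Hch; [|lia|lia].
rewrite sum1_card; apply: eq_card => s; rewrite [in LHS]unfold_in /= !inE.
case HsS : (s \in S) => //=.
rewrite desc_child //; last by apply: Hleaf.
congr andb; rewrite -(inj_eq val_inj) /= inordK //.
have := E_bnd s (depth x); have -> : (depth x == 0) = false by lia.
by [].
Qed.

Lemma geo4 m k : (m <= k)%N -> 4 ^ m = 1 + \sum_(j < k) (if (j < m)%N then 3 * 4 ^ j else 0).
Proof.
elim: k m => [|k IH] m Hm.
  have -> : m = 0 by lia.
  by rewrite big_ord0.
rewrite big_ord_recr /=.
case: (leqP m k) => Hmk.
  by rewrite IH // addn0.
have -> : m = k.+1 by lia.
have Hk := IH k (leqnn k).
rewrite (eq_bigr (fun j : 'I_k => if (j < k)%N then 3 * 4 ^ j else 0)); last first.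
  by move=> j _; rewrite ltn_ord ltnS (ltnW (ltn_ord j)).
by rewrite addnA -Hk expnS mulSn.
Qed.

Lemma sum_min k D c : \sum_(j < k) (if (j < D)%N then c else 0) = minn k D * c.
Proof.
elim: k => [|k IH]; first by rewrite big_ord0 min0n.
rewrite big_ord_recr /= IH; case H: (k < D).
  have -> : minn k.+1 D = (minn k D).+1 by lia.
  by rewrite mulSn addnC.
have -> : minn k.+1 D = minn k D by lia.
by rewrite addn0.
Qed.

Lemma sum_lower (T : finType) (S : {set T}) (m : T -> nat) k D :
  (forall s, s \in S -> (m s <= k)%N) ->
  (forall j, (j < k)%N -> (j < D)%N -> #|[set s in S | (j < m s)%N]| = 4 ^ (D - j.+1)) ->
  (#|S| + minn k D * (3 * 4 ^ (D - 1)) <= \sum_(s in S) 4 ^ m s)%N.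
Proof.
move=> Hmk Hcnt.
rewrite (eq_bigr (fun s => 1 + \sum_(j < k) (if (j < m s)%N then 3 * 4 ^ j else 0))); last first.
  by move=> s Hs; apply: geo4; apply: Hmk.
rewrite big_split /= sum1_card leq_add2l exchange_big /= -sum_min.
apply: leq_sum => j _.
case: ifP => HjD //.
rewrite -big_mkcondr /= sum_nat_const.
have -> : #|[pred s in S | (j < m s)%N]| = #|[set s in S | (j < m s)%N]|.
  by apply: eq_card => s; rewrite !inE.
rewrite Hcnt //.
rewrite mulnCA -expnD; apply: leq_mul => //; rewrite leq_exp2l //; lia.
Qed.
Lemma pow4_ge h : (3 * h + 1 <= 4 ^ h)%N.
Proof. elim: h => // h IH; rewrite expnS; lia. Qed.

Lemma pow2_le4 h : (2 ^ h <= 4 ^ h)%N.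
Proof. by elim: h => // h IH; rewrite !expnS leq_mul. Qed.

Lemma natineq d h k : (0 < h)%N -> (2 * 4 ^ h + 3 * h <= 3 * d + 3)%N -> (k <= d)%N ->
  (2 ^ (k + d) <= 2 * (5 * 4 ^ (d - h - 1) + minn k (d - h) * (3 * 4 ^ (d - h - 1))))%N.
Proof.
move=> Hh Hyp Hk.
have H4 := pow4_ge h; have H24 := pow2_le4 h.
set D := d - h.
have HD : (1 <= D)%N by rewrite /D; lia.
have Hd : d = D + h by rewrite /D; lia.
set X := 4 ^ (D - 1).
have HX : X = 2 ^ (2 * (D - 1)) by rewrite /X expnM.
have -> : 2 * (5 * X + minn k D * (3 * X)) = X * (2 * (5 + 3 * minn k D)) by ring.
case: (leqP D k) => HkD.
  apply: (@leq_trans (2 ^ (2 * d))); first by rewrite leq_exp2l //; lia.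
  have -> : 2 ^ (2 * d) = X * (4 * 4 ^ h).
    have E4 : 4 ^ h = 2 ^ (2 * h) by rewrite expnM.
    by rewrite HX E4 -[4]/(2 ^ 2) -!expnD; congr (2 ^ _); lia.
  by rewrite leq_mul2l; apply/orP; right; lia.
case: (leqP (k + h + 1) D) => Hc.
  apply: (@leq_trans (2 * X)).
    by rewrite HX -expnS leq_exp2l //; lia.
  by rewrite mulnC leq_mul2l; apply/orP; right; lia.
have -> : 2 ^ (k + d) = X * (2 * 2 ^ (k + h + 1 - D)).
  by rewrite HX -expnS -expnD; congr (2 ^ _); lia.
rewrite leq_mul2l; apply/orP; right; rewrite leq_mul2l /=.
apply: (@leq_trans (2 ^ h)); first by rewrite leq_exp2l //; lia.
lia.
Qed.

Open Scope ring_scope.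
Lemma half_mono (n L : nat) : (n <= L)%N -> (1/2 : rat) ^ (L%:Z - 1) <= (1/2) ^ (n%:Z - 1).
Proof.
move=> H.
have -> : (L%:Z - 1 = (n%:Z - 1) + (L - n)%N%:Z) by lia.
rewrite expfzDr // -exprnP.
apply: ler_piMr; first exact: exprz_ge0.
by apply: exprn_ile1.
Qed.

Lemma half_L (k d m : nat) : (m <= k)%N -> (m < d)%N ->
  (1/2 : rat) ^ ((k - m + (d - m))%N%:Z - 1) = (1/2) ^+ (k + d) * (2 * 4 ^ m)%N%:R.
Proof.
move=> H1 H2.
have -> : ((k - m + (d - m))%N%:Z - 1 = (k - m + (d - m) - 1)%N%:Z) by lia.
rewrite -exprnP (_ : (k + d = (k - m + (d - m) - 1) + (2 * m + 1))%N); last by lia.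
rewrite exprD -mulrA (_ : (2 * 4 ^ m = 2 ^ (2 * m + 1))%N); last by rewrite expnD expnM mulnC.
rewrite natrX -exprMn (_ : (1/2 : rat) * 2%:R = 1) ?expr1n ?mulr1 //.
Qed.

Lemma half_two : (1/2 : rat) ^ (0%:Z - 1) = 2.
Proof. by []. Qed.
Close Scope ring_scope.

Definition mfun d (u s : Tvert d) : nat :=
  \max_(j < (depth u).+1 | descendant (pre u j) s) (j : nat).

Lemma mfun_spec d (u s : Tvert d) :
  [/\ (mfun u s <= depth u)%N, descendant (pre u (mfun u s)) s &
      forall j, (j <= depth u)%N -> descendant (pre u j) s -> (j <= mfun u s)%N].
Proof.
have Hc : (0 < #|(fun j : 'I_(depth u).+1 => descendant (pre u j) s)|)%N.
  by apply/card_gt0P; exists ord0; rewrite unfold_in /= desc_root.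
have [j0 Hj0 Heq] := eq_bigmax_cond (fun j : 'I_(depth u).+1 => (j : nat)) Hc.
have Hm : mfun u s = j0 by rewrite -Heq.
split.
- by rewrite Hm -ltnS ltn_ord.
- by rewrite Hm; move: Hj0; rewrite unfold_in.
- move=> j Hj Hd; rewrite /mfun.
  by apply: (@leq_bigmax_cond _ (fun j : 'I_(depth u).+1 => descendant (pre u j) s) _ (Ordinal (n:=(depth u).+1) (m:=j) Hj)).
Qed.

Lemma hd_nat (d h : nat) : (0 < h)%N ->
  ((4%:R / 3%:R : rat) * 2%:R ^+ (2 * h - 1) + h%:R - 1 <= d%:R)%R ->
  (2 * 4 ^ h + 3 * h <= 3 * d + 3)%N.
Proof.
move=> Hh hd.
have E : (2 * 4 ^ h = 4 * 2 ^ (2 * h - 1))%N.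
  have E4 : (4 ^ h = 2 ^ (2 * h))%N by rewrite expnM.
  rewrite E4 -[4%N]/(2 ^ 2)%N -expnS -expnD; congr (2 ^ _)%N; lia.
rewrite E -(ler_nat rat) !natrD ?natrM !natrX.
move: hd; set X := (2%:R ^+ (2 * h - 1) : rat).
move=> hd; lra.
Qed.

Lemma adm_self d (S : {set Tvert d}) (u : Tvert d) : u \in S ->
  has_admissible_path (@Tedge d) S u u 0.
Proof.
move=> Hu; apply: (@adm_from_fun _ _ S (fun _ => u) 0 u u) => //.
- by move=> i j; rewrite !mem_iota => /andP[_ Hi] /andP[_ Hj] _; lia.
- suff -> : [set u; u] :&: S = [set u] by rewrite cards1.
  by apply/setP => x; rewrite !inE orbb; case: eqP => // ->.
- by move=> i; lia.
Qed.

Lemma big_minn_le (I : eqType) (r : seq I) (P : pred I) (F : I -> nat) x j :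
  j \in r -> P j -> (\big[minn/x]_(i <- r | P i) F i <= F j)%N.
Proof.
elim: r => // a r IH; rewrite inE big_cons; case/orP => [/eqP <-|Hj] HP.
  by rewrite HP geq_minl.
case: ifP => _; last exact: IH.
by rewrite geq_min IH ?orbT.
Qed.

Theorem mainTheorem15 (d h : nat) (hpos : (0 < h)%N) (dpos : (0 < d)%N)
  (hd : ((4%:R / 3%:R : rat) * 2%:R ^+ (2 * h - 1) + h%:R - 1 <= d%:R)%R)
  (S : {set Tvert d})
  (Sleaves : forall s, s \in S -> is_leaf s)
  (Scard : #|S| = (5 * 4 ^ (d - h - 1))%N)
  (Sone : forall v : Tvert d, depth v = (d - h)%N ->
            #|[set s in S | descendant v s]| = 1%N) :
  exp_dominating (@Tedge d) S /\ (gamma_e (@Tedge d) <= 5 * 4 ^ (d - h - 1))%N.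
Proof.
have Hnat := hd_nat hpos hd.
have Hleaf : forall s, s \in S -> depth s = d by move=> s /Sleaves /eqP.
have HD : (d - h <= d)%N by apply: leq_subr.
have Hcnt := count_desc Hleaf HD Sone.
have Hdom : exp_dominating (@Tedge d) S.
  move=> u; rewrite /expweight.
  have Hge0 : forall v, (0 <= match distS (@Tedge d) S u v with
              | Some n => ((1 / 2 : rat) ^ (n%:Z - 1))%R | None => 0%R end)%R.
    by move=> v; case: distS => [n|//]; apply: exprz_ge0.
  case HuS : (u \in S).
    rewrite (bigD1 u) //=.
    have [n' Hn' Hle] := distS_le (adm_self HuS).
    have Hn0 : n' = 0%N by lia.
    rewrite Hn' Hn0 half_two.
    have : (0 <= \sum_(i in S | i != u) match distS (@Tedge d) S u i with
              | Some n => ((1 / 2 : rat) ^ (n%:Z - 1))%R | None => 0%R end)%R.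
      by apply: sumr_ge0 => v _; apply: Hge0.
    move=> H; lra.
  set k := depth u.
  have Hkd : (k <= d)%N by apply: depth_le.
  set N := (\sum_(s in S) 4 ^ mfun u s)%N.
  have HN : (2 ^ (k + d) <= 2 * N)%N.
    apply: (leq_trans (natineq hpos Hnat Hkd)); rewrite leq_mul2l /= -Scard.
    apply: sum_lower.
      by move=> s _; case: (mfun_spec u s).
    move=> j Hjk HjD.
    have -> : [set s in S | (j < mfun u s)%N] = [set s in S | descendant (pre u j.+1) s].
      apply/setP => s; rewrite !inE; case: (s \in S) => //=.
      case: (mfun_spec u s) => H1 H2 H3.
      apply/idP/idP => H.
        exact: desc_mono H H2.
      exact: H3 H.
    apply: Hcnt; rewrite depth_pre_le //; lia.
  apply: (@le_trans _ _ (\sum_(s in S) ((1/2 : rat) ^+ (k + d) * (2 * 4 ^ mfun u s)%N%:R))%R).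
    rewrite -mulr_sumr -natr_sum -big_distrr /= -/N.
    apply: (@le_trans _ _ ((1/2 : rat) ^+ (k + d) * (2 ^ (k + d))%N%:R)%R).
      by rewrite natrX -exprMn (_ : (1/2 : rat) * 2%:R = 1)%R ?expr1n.
    by apply: ler_wpM2l; [apply: exprn_ge0 | rewrite ler_nat].
  apply: ler_sum => s Hs.
  case: (mfun_spec u s) => H1 H2 H3.
  have HuS' : u \notin S by rewrite HuS.
  have Hmax : forall j, (mfun u s < j <= depth u)%N -> ~~ descendant (pre u j) s.
    move=> j /andP[Hj1 Hj2]; apply/negP => Hj; have := H3 j Hj2 Hj; lia.
  have Hp := tree_path Hleaf HuS' Hs H1 H2 Hmax.
  have [n' Hn' Hle] := distS_le Hp.
  rewrite Hn'.
  have Hmd : (mfun u s < d)%N.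
    rewrite ltnNge; apply/negP => Hdm.
    have Hmk : mfun u s = k by lia.
    have E1 : pre u (mfun u s) = u by apply: pre_full; lia.
    have Hus : u = s.
      have := pre_of_desc H2; rewrite E1 => <-; apply: pre_full.
      by rewrite (Hleaf _ Hs); lia.
    by move: HuS; rewrite Hus Hs.
  rewrite -half_L //.
  exact: half_mono.
have Hb : exp_dominating_b (@Tedge d) S by apply/forallP.
split => //.
rewrite -Scard /gamma_e; apply: big_minn_le => //; exact: mem_index_enum.
Qed.
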